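(* There exists a family of connected bipartite graphs $(G_N)_{N\ge 4}$ with $|V(G_N)|=N$, $\Delta(G_N)\le N-2<N-1$, and $\hat r_\infty(G_N)\to 1$ as $N\to\infty$.
   Context: All graphs are finite and simple; a graph is nonempty if it has at least one edge. $\Delta$ is maximum degree, $tK_2$ is a matching with $t$ edges. For graphs $F,G,H$, $F\to(G,H)$ means every red--blue coloring of $E(F)$ contains a red copy of $G$ or a blue copy of $H$, and $\hat r(G,H)=\min\{|E(F)|:F\to(G,H)\}$. For a nonempty graph $G$, $\hat r_\infty(G)=\lim_{t\to\infty}\frac{\hat r(tK_2,G)}{t\,|E(G)|}$ (this limit exists). *)

(* Defs.v *)
From Stdlib Require Import Reals.
From mathcomp Require Import all_boot.
Set Implicit Arguments. Unset Strict Implicit. Unset Printing Implicit Defensive.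

Definition simple_rel (T : finType) (e : rel T) : Prop :=
  symmetric e /\ irreflexive e.

Record sgraph := SGraph {
  nv : nat;
  adj : rel 'I_nv;
  adj_sym : symmetric adj;
  adj_irr : irreflexive adj }.

Definition edge_set (T : finType) (e : rel T) : {set {set T}} :=
  [set A : {set T} | [exists x, exists y, (A == [set x; y]) && e x y]].

Definition num_edges (T : finType) (e : rel T) : nat := #|edge_set e|.

Definition degree (T : finType) (e : rel T) (v : T) : nat := #|[set u | e v u]|.

Definition connected_graph (T : finType) (e : rel T) : Prop :=
  forall x y : T, connect e x y.

Definition bipartite (T : finType) (e : rel T) : Prop :=
  exists part : T -> bool, forall u v, e u v -> part u != part v.

(* The colouring c assigns to each edge {x,y} (as a 2-set) a colour:
   true = red, false = blue. [has_col_copy eF P eG] : there is a copy of the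
   graph eG in eF (an injective vertex map sending edges to edges) all of whose
   edges A satisfy P A. *)
Definition has_col_copy (T U : finType) (eF : rel T) (P : {set T} -> bool)
    (eG : rel U) : Prop :=
  exists f : U -> T, injective f /\
    forall u v, eG u v -> eF (f u) (f v) && P [set f u; f v].

Definition arrows (T U W : finType) (eF : rel T) (eG : rel U) (eH : rel W)
  : Prop :=
  forall c : {set T} -> bool,
    has_col_copy eF c eG \/ has_col_copy eF (fun A => ~~ c A) eH.

(* m = \hat r(G, H): minimum number of edges of a (finite simple) graph F with
   F -> (G, H). Host graphs are taken on vertex sets 'I_n (WLOG). *)
Definition is_size_ramsey (U W : finType) (eG : rel U) (eH : rel W) (m : nat)
  : Prop :=
  (exists n (eF : rel 'I_n), simple_rel eF /\ arrows eF eG eH /\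
                             num_edges eF = m) /\
  (forall n (eF : rel 'I_n), simple_rel eF -> arrows eF eG eH ->
                             m <= num_edges eF).

(* tK_2 on vertex set 'I_(2t): edges {2i, 2i+1}. *)
Definition matching_rel (t : nat) : rel 'I_(t.*2) :=
  fun i j => (i./2 == j./2) && (i != j).

Definition hat_r_inf_is (G : sgraph) (L : R) : Prop :=
  exists r : nat -> nat,
    (forall t, is_size_ramsey (@matching_rel t) (@adj G) (r t)) /\
    Un_cv (fun t => Rdiv (INR (r t)) (Rmult (INR t) (INR (num_edges (@adj G))))) L.

(* Main.v *)
Require Import Defs.
From Stdlib Require Import Reals Lra Psatz Classical ClassicalEpsilon FunctionalExtensionality.
From mathcomp Require Import all_boot zify.
Set Implicit Arguments. Unset Strict Implicit. Unset Printing Implicit Defensive.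

Definition broom_adj (N : nat) : rel 'I_N := fun i j =>
  (i != j) && [|| (i == 0 :> nat) && (1 <= j <= N-2),
                  (j == 0 :> nat) && (1 <= i <= N-2),
                  (i == 1 :> nat) && (j == N-1 :> nat) |
                  (j == 1 :> nat) && (i == N-1 :> nat)].

Lemma broom_sym N : symmetric (@broom_adj N).
Proof. move=> i j; rewrite /broom_adj eq_sym; case: (i != j) => //=; lia. Qed.

Lemma broom_irr N : irreflexive (@broom_adj N).
Proof. by move=> i; rewrite /broom_adj eqxx. Qed.

Definition Gb (N : nat) : sgraph := SGraph (@broom_sym N) (@broom_irr N).

Lemma deg_aux (T : finType) (e : rel T) (v b : T) :
  irreflexive e -> b != v -> ~~ e v b -> #|[set u | e v u]| + 2 <= #|T|.
Proof.
move=> irr bv nvb.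
have -> : 2 = #|[set v; b]| by rewrite cards2 eq_sym bv.
have D : [set u | e v u] :&: [set v; b] = set0.
  apply/setP => x; rewrite !inE.
  case: eqP => [->|_]; first by rewrite irr.
  by case: eqP => [->|_]; [rewrite (negbTE nvb)|rewrite andbF].
have := cardsU [set u | e v u] [set v; b]; rewrite D cards0 subn0 => <-.
exact: max_card.
Qed.

Lemma broom_deg N (v : 'I_N) : 4 <= N -> degree (@broom_adj N) v <= N - 2.
Proof.
move=> N4; rewrite /degree.
pose bn := if v == 0 :> nat then N-1 else if v == 1 :> nat then 2
           else if v == N-1 :> nat then 0 else 1.
have bl : bn < N by rewrite /bn; move: (ltn_ord v); do ! case: ifP; lia.
suff: #|[set u | broom_adj v u]| + 2 <= N by lia.
apply: leq_trans (_ : _ <= #|'I_N|) _; last by rewrite card_ord.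
apply: (@deg_aux _ (@broom_adj N) v (Ordinal bl) (@broom_irr N));
  rewrite /broom_adj /= /bn -?(inj_eq val_inj) /=;
  move: (ltn_ord v); do ! case: ifP; lia.
Qed.

Lemma broom_bip N : bipartite (@broom_adj N).
Proof.
exists (fun v : 'I_N => (v == 0 :> nat) || (v == N-1 :> nat)).
move=> u v; rewrite /broom_adj -(inj_eq val_inj) /=; move: (ltn_ord u) (ltn_ord v); lia.
Qed.

Lemma broom_conn N : 4 <= N -> connected_graph (@broom_adj N).
Proof.
move=> N4.
have z0l : 0 < N by lia.
have z1l : 1 < N by lia.
pose z0 := Ordinal z0l; pose z1 := Ordinal z1l.
have toz : forall x : 'I_N, connect (@broom_adj N) x z0.
  move=> x; case: (x =P z0) => [->|xz]; first exact: connect0.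
  have xz' : (x : nat) != 0 by apply/eqP => h; apply: xz; apply: val_inj.
  case: (boolP ((x : nat) == N-1)) => xN.
    apply: (@connect_trans _ _ z1); apply: connect1;
    rewrite /broom_adj /z0 /z1 -(inj_eq val_inj) /=; move: (ltn_ord x) xz' xN; lia.
  apply: connect1; rewrite /broom_adj /z0 /z1 -(inj_eq val_inj) /=; move: (ltn_ord x) xz' xN; lia.
move=> x y; apply: (@connect_trans _ _ z0); first exact: toz.
by rewrite (sym_connect_sym (@broom_sym N) z0 y); apply: toz.
Qed.

Lemma broom_edges N : num_edges (@broom_adj N) <= N.
Proof.
rewrite /num_edges.
pose par (v : 'I_N) : 'I_N := insubd v (if v == N-1 :> nat then 1 else 0).
apply: (@leq_trans #|[set [set v; par v] | v : 'I_N]|); last first.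
  by apply: leq_trans (leq_imset_card _ _) _; rewrite cardT size_enum_ord.
apply: subset_leq_card; apply/subsetP => A; rewrite inE => /existsP [x /existsP [y /andP [/eqP -> Hxy]]].
apply/imsetP.
move: Hxy; rewrite /broom_adj => /andP [xy H].
have [xl yl] := (ltn_ord x, ltn_ord y).
case/orP: H => [/andP [x0 yr]|H].
  exists y => //; rewrite setUC; congr (_ :|: _); congr [set _]; apply: val_inj.
  rewrite val_insubd /=; move: x0 yr; do ! case: ifP; lia.
case/orP: H => [/andP [y0 xr]|H].
  exists x => //; congr (_ :|: _); congr [set _]; apply: val_inj.
  rewrite val_insubd /=; move: y0 xr; do ! case: ifP; lia.
case/orP: H => [/andP [x1 yN]|/andP [y1 xN]].
  exists y => //; rewrite setUC; congr (_ :|: _); congr [set _]; apply: val_inj.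
  rewrite val_insubd /=; move: x1 yN; do ! case: ifP; lia.
exists x => //; congr (_ :|: _); congr [set _]; apply: val_inj.
rewrite val_insubd /=; move: y1 xN; do ! case: ifP; lia.
Qed.

Lemma lower_bound (U : finType) (eG : rel U) (z : U) (k : nat) :
  0 < k -> k <= #|[set u | eG z u]| ->
  forall (T : finType) (eF : rel T) t, simple_rel eF ->
  arrows eF (@matching_rel t) eG -> t * k <= num_edges eF.
Proof.
move=> k0 kz T eF t [symF irrF] Harr.
pose EX (X : {set T}) := [set A in edge_set eF | [exists x in X, x \in A]].
pose P (X : {set T}) := #|X| * k <= #|EX X|.
have P0 : P set0 by rewrite /P cards0.
case: (@arg_maxnP _ set0 P (fun X => #|X|) P0) => X PX maxX.
have B : forall v, v \notin X -> #|[set u | eF v u & u \notin X]| < k.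
  move=> v vX; rewrite ltnNge; apply/negP => Hk.
  pose NV := [set u | eF v u & u \notin X].
  pose IM := [set [set v; u] | u in NV].
  have cIM : #|IM| = #|NV|.
    apply: card_in_imset => u1 u2; rewrite !inE => /andP [vu1 _] _ E.
    have : u1 \in [set v; u2] by rewrite -E !inE eqxx orbT.
    rewrite !inE => /orP [/eqP e1|/eqP //].
    by move: vu1; rewrite e1 irrF.
  have dis : IM :&: EX X = set0.
    apply/setP => A; rewrite !inE; apply/negP => /andP [/imsetP [u uN ->]].
    move: uN; rewrite inE => /andP [_ uX].
    case/andP => _ /existsP [x /andP [xX]]; rewrite !inE => /orP [/eqP e|/eqP e].
      by move: vX; rewrite -e xX.
    by move: uX; rewrite -e xX.
  have sub : IM :|: EX X \subset EX (v |: X).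
    apply/subsetP => A; rewrite !inE => /orP [/imsetP [u uN ->]|].
      move: uN; rewrite inE => /andP [vu _].
      apply/andP; split.
        by  apply/existsP; exists v; apply/existsP; exists u; rewrite eqxx vu.
      by apply/existsP; exists v; rewrite !inE eqxx.
    case/andP => -> /existsP [x /andP [xX xA]] /=.
    by apply/existsP; exists x; rewrite !inE xX orbT xA.
  have : P (v |: X).
    rewrite /P cardsU1 vX.
    apply: leq_trans (subset_leq_card sub).
    have := cardsU IM (EX X); rewrite dis cards0 subn0 => ->.
    by rewrite cIM /NV /= mulSn; apply: leq_add.
  by move/maxX; rewrite cardsU1 vX; lia.
pose c (A : {set T}) := [exists x in X, x \in A].
have EXle : #|EX X| <= num_edges eF.
  by apply: subset_leq_card; apply/subsetP => A; rewrite inE => /andP [].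
case: (Harr c) => [[f [finj Hf]] | [g [ginj Hg]]].
- suff tX : t <= #|X|.
    apply: leq_trans EXle; apply: leq_trans PX; by rewrite leq_mul2r tX orbT.
  have lol (i : 'I_t) : i.*2 < t.*2 by rewrite ltn_double.
  have hil (i : 'I_t) : i.*2.+1 < t.*2 by move: (ltn_ord i); lia.
  pose lo (i : 'I_t) := Ordinal (lol i).
  pose hi (i : 'I_t) := Ordinal (hil i).
  pose h (i : 'I_t) := if f (lo i) \in X then f (lo i) else f (hi i).
  have hX : forall i, h i \in X.
    move=> i; have := Hf (lo i) (hi i).
    rewrite /matching_rel -(inj_eq val_inj) /=.
    have -> : ((i.*2)./2 == (i.*2.+1)./2) && (i.*2 != i.*2.+1) by lia.
    move=> /(_ isT) /andP [_ /existsP [x /andP [xX]]].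
    rewrite /h; case: ifP => // loX; rewrite !inE => /orP [/eqP e|/eqP e].
      by move: loX; rewrite -e xX.
    by rewrite -e.
  have hv : forall i, exists a : 'I_t.*2, h i = f a /\ (a : nat)./2 = i.
    move=> i; rewrite /h; case: ifP => _.
      by exists (lo i); split => //=; lia.
    by exists (hi i); split => //=; lia.
  have hinj : injective h.
    move=> i j E; have [a [ea ai]] := hv i; have [b [eb bj]] := hv j.
    have ab : a = b by apply: finj; rewrite -ea -eb.
    by apply: val_inj; rewrite /= -ai -bj ab.
  have := card_imset [set: 'I_t] hinj; rewrite cardsT card_ord => <-.
  apply: subset_leq_card; apply/subsetP => x /imsetP [i _ ->]; exact: hX.
- have : 0 < #|[set u | eG z u]| by lia.
  case/card_gt0P => u0; rewrite inE => zu0.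
  have gzX : g z \notin X.
    have := Hg z u0 zu0 => /andP [_]; rewrite /c; apply: contra => gX.
    by apply/existsP; exists (g z); rewrite gX !inE eqxx.
  exfalso; move: (B _ gzX); rewrite ltnNge => /negP; apply.
  apply: leq_trans kz _.
  rewrite -(card_imset [set u | eG z u] ginj).
  apply: subset_leq_card; apply/subsetP => x /imsetP [u]; rewrite inE => zu ->.
  have := Hg z u zu => /andP [gzu]; rewrite /c !inE gzu /=.
  apply: contra => uX; apply/existsP; exists (g u); rewrite uX !inE eqxx orbT.
  done.
Qed.

Definition dunion n1 n2 (e1 : rel 'I_n1) (e2 : rel 'I_n2) : rel 'I_(n1+n2) :=
  fun i j => match split i, split j with
  | inl a, inl b => e1 a b
  | inr a, inr b => e2 a b
  | _, _ => false end.

Lemma split_lshift n1 n2 (a : 'I_n1) : split (lshift n2 a) = inl a.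
Proof. exact: (unsplitK (inl _ a)). Qed.
Lemma split_rshift n1 n2 (a : 'I_n2) : split (rshift n1 a) = inr a.
Proof. exact: (unsplitK (inr _ a)). Qed.

Lemma imset2 (aT rT : finType) (f : aT -> rT) (a b : aT) :
  f @: [set a; b] = [set f a; f b].
Proof. by rewrite imsetU1 imset_set1. Qed.

Section Union.
Variables (n1 n2 : nat) (e1 : rel 'I_n1) (e2 : rel 'I_n2).

Lemma dunion_simple : simple_rel e1 -> simple_rel e2 -> simple_rel (dunion e1 e2).
Proof.
move=> [s1 i1] [s2 i2]; split.
  move=> i j; rewrite /dunion; case: (split i) => a; case: (split j) => b //.
by move=> i; rewrite /dunion; case: (split i).
Qed.

Lemma dunion_edges :
  num_edges (dunion e1 e2) <= num_edges e1 + num_edges e2.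
Proof.
rewrite /num_edges.
pose I1 := [set lshift n2 @: A | A : {set 'I_n1} in edge_set e1].
pose I2 := [set @rshift n1 n2 @: A | A : {set 'I_n2} in edge_set e2].
apply: (@leq_trans #|I1 :|: I2|).
  apply: subset_leq_card; apply/subsetP => A.
  rewrite /edge_set inE => /existsP [x /existsP [y /andP [/eqP -> Hxy]]].
  move: Hxy; rewrite /dunion.
  case: split_ordP => a ->; case: split_ordP => b -> // Hab; rewrite !inE /=.
    apply/orP; left; apply/imsetP; exists [set a; b]; last by rewrite imset2.
    by rewrite inE; apply/existsP; exists a; apply/existsP; exists b; rewrite eqxx Hab.
  apply/orP; right; apply/imsetP; exists [set a; b]; last by rewrite imset2.
  by rewrite inE; apply/existsP; exists a; apply/existsP; exists b; rewrite eqxx Hab.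
apply: leq_trans (leq_card_setU I1 I2) _.
by apply: leq_add; apply: leq_imset_card.
Qed.

Lemma dunion_arrows (U : finType) (eG : rel U) t1 t2 :
  arrows e1 (@matching_rel t1) eG -> arrows e2 (@matching_rel t2) eG ->
  arrows (dunion e1 e2) (@matching_rel (t1 + t2)) eG.
Proof.
move=> H1 H2 c.
case: (H1 (fun A => c (lshift n2 @: A))) => [[f1 [inj1 Hf1]]|[g [ginj Hg]]]; last first.
  right; exists (fun u => lshift n2 (g u)); split.
    by move=> u v /lshift_inj /ginj.
  move=> u v uv; have := Hg u v uv; rewrite /dunion !split_lshift imset2 //.
case: (H2 (fun A => c (@rshift n1 n2 @: A))) => [[f2 [inj2 Hf2]]|[g [ginj Hg]]]; last first.
  right; exists (fun u => rshift n1 (g u)); split.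
    by move=> u v /rshift_inj /ginj.
  move=> u v uv; have := Hg u v uv; rewrite /dunion !split_rshift imset2 //.
left.
pose f (i : 'I_((t1 + t2).*2)) : 'I_(n1 + n2) :=
  match split (cast_ord (doubleD t1 t2) i) with
  | inl a => lshift n2 (f1 a) | inr b => rshift n1 (f2 b) end.
exists f; split.
  move=> i j; rewrite /f.
  case: splitP => a Ha; case: splitP => b Hb /=.
  - move/lshift_inj/inj1 => ab; apply: val_inj; move: Ha Hb; rewrite ab /=; lia.
  - move/(congr1 val) => /=; move: (ltn_ord (f1 a)); lia.
  - move/(congr1 val) => /=; move: (ltn_ord (f1 b)); lia.
  - move/rshift_inj/inj2 => ab; apply: val_inj; move: Ha Hb; rewrite ab /=; lia.
move=> u v; rewrite /matching_rel -(inj_eq val_inj) /= => Huv.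
rewrite /f; case: splitP => a Ha; case: splitP => b Hb /=.
- rewrite /dunion !split_lshift -imset2; apply: Hf1.
  rewrite /matching_rel -(inj_eq val_inj) /=; move: Ha Hb Huv => /= ; lia.
- exfalso; move: Ha Hb Huv (ltn_ord a) => /=; lia.
- exfalso; move: Ha Hb Huv (ltn_ord b) => /=; lia.
- rewrite /dunion !split_rshift -imset2; apply: Hf2.
  rewrite /matching_rel -(inj_eq val_inj) /=; move: Ha Hb Huv => /= ; lia.
Qed.
End Union.

Lemma self_arrows n (e : rel 'I_n) : simple_rel e ->
  arrows e (@matching_rel 1) e.
Proof.
move=> [se ie] c.
case: (boolP [exists x, exists y, e x y && c [set x; y]]).
  case/existsP => x /existsP [y /andP [exy cxy]].
  left; exists (fun i : 'I_(1.*2) => if (i : nat) == 0 then x else y); split.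
    move=> i j; have := ltn_ord i; have := ltn_ord j.
    have xy : x != y by apply/eqP => E; move: exy; rewrite E ie.
    case: ((i : nat) =P 0) => Hi; case: ((j : nat) =P 0) => Hj /= li lj E; apply: val_inj => /=; try lia.
      by move: xy; rewrite E eqxx.
    by move: xy; rewrite E eqxx.
  move=> i j; rewrite /matching_rel -(inj_eq val_inj) /=.
  have := ltn_ord i; have := ltn_ord j; rewrite /=.
  case: ((i : nat) =P 0) => Hi; case: ((j : nat) =P 0) => Hj /= li lj H; try (exfalso; lia).
    by rewrite exy cxy.
  by rewrite se exy setUC cxy.
move=> H; right; exists id; split => // u v euv; rewrite euv /=.
by apply: contra H => cuv; apply/existsP; exists u; apply/existsP; exists v; rewrite euv.
Qed.

Lemma empty_arrows (U : finType) (eG : rel U) :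
  arrows (fun _ _ : 'I_0 => false) (@matching_rel 0) eG /\
  simple_rel (fun _ _ : 'I_0 => false) /\ num_edges (fun _ _ : 'I_0 => false) = 0.
Proof.
split; last split.
- move=> c; left; exists (fun i => i); split => //; by move=> [].
- by split.
- rewrite /num_edges /edge_set; apply/eqP; rewrite cards_eq0; apply/eqP/setP => A.
  by rewrite !inE; apply/existsP => [[[]]].
Qed.

Section Fek.
Variable a : nat -> nat.
Hypothesis a0 : a 0 = 0.
Hypothesis asub : forall m n, a (m + n) <= a m + a n.

Lemma a_lin s : a s <= s * a 1.
Proof.
elim: s => [|s IH]; first by rewrite a0.
rewrite -addn1; apply: leq_trans (asub _ _) _; rewrite mulnDl mul1n leq_add2r //.
Qed.

Lemma a_div q m s : a (q * m + s) <= q * a m + a s.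
Proof.
elim: q => [|q IH]; first by rewrite !mul0n !add0n.
rewrite mulSn -addnA; apply: leq_trans (asub _ _) _.
rewrite mulSn -addnA leq_add2l //.
Qed.

Lemma a_key n m : 0 < m -> a n * m <= n * a m + m * (m * a 1).
Proof.
move=> m0.
have e : n = n %/ m * m + n %% m by rewrite -divn_eq.
have h1 := a_div (n %/ m) m (n %% m).
have h2 := a_lin (n %% m).
have h3 : n %% m < m by rewrite ltn_mod.
have h4 : n %/ m * m <= n by rewrite leq_divM.
rewrite -e in h1.
have h5 : a n <= n %/ m * a m + m * a 1.
  apply: leq_trans h1 _; rewrite leq_add2l; apply: leq_trans h2 _.
  by rewrite leq_mul2r ltnW ?orbT.
apply: leq_trans (_ : (n %/ m * a m + m * a 1) * m <= _).
  by rewrite leq_mul2r h5 orbT.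
rewrite mulnDl; apply: leq_add; last by rewrite mulnC.
by rewrite mulnAC leq_mul2r h4 orbT.
Qed.

Local Open Scope R_scope.

Lemma fekete : exists l, Un_cv (fun t => INR (a t) / INR t) l /\
  (forall t, (0 < t)%N -> l <= INR (a t) / INR t) /\
  (forall x, (forall t, (0 < t)%N -> x <= INR (a t) / INR t) -> x <= l).
Proof.
pose S x := exists t, (0 < t)%N /\ x = - (INR (a t) / INR t).
have pos t : (0 < t)%N -> 0 < INR t by move=> h; apply: lt_0_INR; apply/ltP.
have q0 t : (0 < t)%N -> 0 <= INR (a t) / INR t.
  move=> h; apply: Rmult_le_pos; [exact: pos_INR | left; apply: Rinv_0_lt_compat; exact: pos].
have Sb : bound S.
  by exists 0; move=> x [t [t0 ->]]; have := q0 t t0; lra.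
have Sne : exists x, S x by exists (- (INR (a 1) / INR 1)); exists 1%N.
have [m [mub mlub]] := completeness S Sb Sne.
have low : forall t, (0 < t)%N -> - m <= INR (a t) / INR t.
  move=> t t0; have := mub (- (INR (a t) / INR t)) (ex_intro _ t (conj t0 erefl)); lra.
have glb : forall x, (forall t, (0 < t)%N -> x <= INR (a t) / INR t) -> x <= - m.
  move=> x hx; suff : m <= - x by lra.
  by apply: mlub => y [t [t0 ->]]; have := hx t t0; lra.
exists (- m); split; last by split.
move=> eps eps0.
have [t0 [t00 ht0]] : exists t, (0 < t)%N /\ INR (a t) / INR t < - m + eps / 2.
  apply: NNPP => H.
  have : - m + eps / 2 <= - m.
    apply: glb => t tp; apply: Rnot_lt_le => hlt; apply: H; by exists t.
  lra.
have [N HN] := INR_archimed (eps / 2) (INR (t0 * a 1)%N) ltac:(lra).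
exists N.+1 => n /leP nN.
have n0 : (0 < n)%N by lia.
have Nn : INR N <= INR n by apply: le_INR; apply/leP; lia.
have key := a_key n t00.
have keyR : INR (a n) * INR t0 <= INR n * INR (a t0) + INR t0 * INR (t0 * a 1)%N.
  rewrite -!mult_INR -plus_INR; apply: le_INR; apply/leP; exact: key.
have pn := pos n n0; have pt := pos t0 t00.
have b1 : INR (a n) / INR n <= INR (a t0) / INR t0 + INR (t0 * a 1)%N / INR n.
  apply: (Rmult_le_reg_r (INR n * INR t0)); first by apply: Rmult_lt_0_compat.
  have -> : INR (a n) / INR n * (INR n * INR t0) = INR (a n) * INR t0 by field; lra.
  have -> : (INR (a t0) / INR t0 + INR (t0 * a 1)%N / INR n) * (INR n * INR t0)
     = INR n * INR (a t0) + INR t0 * INR (t0 * a 1)%N by field; lra.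
  exact: keyR.
have b2 : INR (t0 * a 1)%N / INR n < eps / 2.
  apply: (Rmult_lt_reg_r (INR n)) => //.
  have -> : INR (t0 * a 1)%N / INR n * INR n = INR (t0 * a 1)%N by field; lra.
  have : INR N * (eps / 2) <= INR n * (eps / 2) by apply: Rmult_le_compat_r; lra.
  lra.
have b3 := low n n0.
rewrite /R_dist Rabs_right; lra.
Qed.
End Fek.

Lemma ex_min (P : nat -> Prop) : (exists m, P m) -> exists m, P m /\ forall k, P k -> m <= k.
Proof.
move=> ex.
pose pb m := if excluded_middle_informative (P m) then true else false.
have exb : exists m, pb m.
  by case: ex => m Pm; exists m; rewrite /pb; case: excluded_middle_informative.
case: (ex_minnP exb) => m pm hm; exists m; split.
  by move: pm; rewrite /pb; case: excluded_middle_informative.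
move=> k Pk; apply: hm; rewrite /pb; case: excluded_middle_informative => //.
Qed.

Lemma sg_simple (G : sgraph) : simple_rel (@adj G).
Proof. split; [exact: adj_sym | exact: adj_irr]. Qed.

Lemma host_exists (G : sgraph) t : exists n (eF : rel 'I_n),
  simple_rel eF /\ arrows eF (@matching_rel t) (@adj G).
Proof.
elim: t => [|t [n [eF [sF aF]]]].
  have [A [S _]] := empty_arrows (@adj G); by exists 0, (fun _ _ => false).
exists (n + nv G), (dunion eF (@adj G)); split.
  exact: dunion_simple sF (sg_simple G).
have := dunion_arrows aF (self_arrows (sg_simple G)); by rewrite addn1.
Qed.

Lemma ramsey_ex (G : sgraph) t : exists m, is_size_ramsey (@matching_rel t) (@adj G) m.
Proof.
pose P m := exists n (eF : rel 'I_n), simple_rel eF /\ arrows eF (@matching_rel t) (@adj G)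
   /\ num_edges eF = m.
have [n [eF [s a]]] := host_exists G t.
have [m [Pm hm]] := ex_min (ex_intro P (num_edges eF) (ex_intro _ n (ex_intro _ eF (conj s (conj a erefl))))).
exists m; split => //.
by move=> n2 eF2 s2 a2; apply: hm; exists n2, eF2.
Qed.

Section Rprops.
Variables (G : sgraph) (r : nat -> nat).
Hypothesis hr : forall t, is_size_ramsey (@matching_rel t) (@adj G) (r t).

Lemma r0 : r 0 = 0.
Proof.
have [A [S E]] := empty_arrows (@adj G).
by apply/eqP; rewrite -leqn0; have := (hr 0).2 _ _ S A; rewrite E.
Qed.

Lemma rsub t1 t2 : r (t1 + t2) <= r t1 + r t2.
Proof.
have [[n1 [e1 [s1 [a1 <-]]]] _] := hr t1.
have [[n2 [e2 [s2 [a2 <-]]]] _] := hr t2.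
apply: leq_trans (dunion_edges e1 e2).
apply: (hr (t1 + t2)).2; first exact: dunion_simple.
exact: dunion_arrows.
Qed.

Lemma r1 : r 1 <= num_edges (@adj G).
Proof. apply: (hr 1).2; [exact: sg_simple | exact: self_arrows (sg_simple G)]. Qed.

Lemma rlow (z : 'I_(nv G)) k : 0 < k -> k <= #|[set u | adj z u]| -> forall t, t * k <= r t.
Proof.
move=> k0 kz t; have [[n [e [s [a <-]]]] _] := hr t.
exact: (lower_bound k0 kz s a).
Qed.
End Rprops.

Lemma broom_center N (N4 : 4 <= N) :
  exists z : 'I_N, N - 2 <= #|[set u | broom_adj z u]|.
Proof.
have z0l : 0 < N by lia.
have zNl : N - 1 < N by lia.
exists (Ordinal z0l).
pose zN := Ordinal zNl.
have sub : ~: [set Ordinal z0l; zN] \subset [set u | broom_adj (Ordinal z0l) u].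
  apply/subsetP => u; rewrite !inE /broom_adj -!(inj_eq val_inj) /=.
  by move: (ltn_ord u); lia.
apply: leq_trans (subset_leq_card sub).
have hc := cardsC [set Ordinal z0l; zN].
rewrite cards2 card_ord -(inj_eq val_inj) /= in hc.
have e : (0 != N - 1) = true by lia.
move: hc; rewrite e /=; lia.
Qed.

Local Open Scope R_scope.

Lemma per_N N : (4 <= N)%N -> exists x, hat_r_inf_is (Gb N) x /\ 1 - 2 / INR N <= x <= 1.
Proof.
move=> N4.
have [r hr] : exists r : nat -> nat, forall t, is_size_ramsey (@matching_rel t) (@adj (Gb N)) (r t).
  exists (fun t => proj1_sig (constructive_indefinite_description _ (ramsey_ex (Gb N) t))).
  move=> t; exact: proj2_sig (constructive_indefinite_description _ (ramsey_ex (Gb N) t)).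
have [l [cv [lowl glbl]]] := fekete (r0 hr) (rsub hr).
have [z hz] := broom_center N4.
have lowr : forall t, (t * (N - 2) <= r t)%N.
  apply: (@rlow (Gb N) r hr z) => //; lia.
pose E := num_edges (@adj (Gb N)).
have EN : (E <= N)%N by exact: broom_edges.
have r1E : (r 1 <= E)%N by exact: r1 hr.
have N2l : INR (N - 2) <= l.
  apply: glbl => t t0.
  have pt : 0 < INR t by apply: lt_0_INR; apply/ltP.
  apply: (Rmult_le_reg_r (INR t)) => //.
  have -> : INR (r t) / INR t * INR t = INR (r t) by field; lra.
  rewrite -mult_INR; apply: le_INR; apply/leP; move: (lowr t); lia.
have lE : l <= INR E.
  apply: Rle_trans (lowl 1%N isT) _.
  rewrite /= Rdiv_1_r; apply: le_INR; apply/leP; exact: r1E.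
have N2 : INR (N - 2) = INR N - 2.
  rewrite minus_INR; last by apply/leP; lia.
  by rewrite /=; lra.
have N4R : 4 <= INR N.
  have -> : 4 = INR 4 by rewrite /=; lra.
  by apply: le_INR; apply/leP.
have ENR : INR E <= INR N by apply: le_INR; apply/leP.
have E0 : 0 < INR E by lra.
exists (l / INR E); split.
  exists r; split => //.
  have cv2 := CV_mult _ _ _ _ cv (fun eps (h : eps > 0) => ex_intro _ 0%N (fun n _ =>
      (ltac:(rewrite /Rdist Rminus_diag Rabs_R0; lra) : Rdist (/ INR E) (/ INR E) < eps))).
  have -> : (fun t => INR (r t) / (INR t * INR E)) = (fun t => INR (r t) / INR t * / INR E).
    apply: functional_extensionality => t; rewrite /Rdiv Rinv_mult; ring.
  exact: cv2.
split.
  apply: (Rmult_le_reg_r (INR E)) => //.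
  have -> : l / INR E * INR E = l by field; lra.
  have -> : (1 - 2 / INR N) * INR E = INR E - 2 * INR E / INR N by field; lra.
  have : INR E - 2 * INR E / INR N <= INR N - 2.
    apply: (Rmult_le_reg_r (INR N)); first lra.
    have -> : (INR E - 2 * INR E / INR N) * INR N = INR E * (INR N - 2) by field; lra.
    have : INR E * (INR N - 2) <= INR N * (INR N - 2) by apply: Rmult_le_compat_r; lra.
    lra.
  lra.
apply: (Rmult_le_reg_r (INR E)) => //.
have -> : l / INR E * INR E = l by field; lra.
lra.
Qed.

Definition goodx (N : nat) (x : R) : Prop := 1 - 2 / INR N <= x <= 1.

Local Close Scope R_scope.

Theorem corollary3p6 :
  exists G : nat -> sgraph,
    (forall N, 4 <= N ->
       nv (G N) = N /\
       connected_graph (@adj (G N)) /\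
       bipartite (@adj (G N)) /\
       (forall v, degree (@adj (G N)) v <= N - 2)) /\
    exists L : nat -> R,
      (forall N, 4 <= N -> hat_r_inf_is (G N) (L N)) /\
      Un_cv L R1.
Proof.
exists Gb; split.
  move=> N N4; split => //; split; first exact: broom_conn.
  split; first exact: broom_bip.
  move=> v; exact: broom_deg.
have hx : forall N, exists x, ((4 <= N)%N -> hat_r_inf_is (Gb N) x) /\
                              ((4 <= N)%N -> goodx N x).
  move=> N; case: (boolP (4 <= N)%N) => N4.
    have [x [h1 h2]] := per_N N4; by exists x.
  by exists R0; split => h; exfalso; move/negP: N4; apply.
exists (fun N => proj1_sig (constructive_indefinite_description _ (hx N))).
split.
  by move=> N N4; case: (proj2_sig (constructive_indefinite_description _ (hx N))) => h _; apply: h.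
Local Open Scope R_scope.
move=> eps eps0.
have [n hn] := INR_archimed eps 2 eps0.
exists (n + 4)%N => N /leP nN.
case: (proj2_sig (constructive_indefinite_description _ (hx N))) => _ /(_ ltac:(lia)).
set x := proj1_sig _ => [[b1 b2]].
have NR : INR n <= INR N by apply: le_INR; lia.
have N4R : 4 <= INR N.
  have -> : 4 = INR 4 by rewrite /=; lra.
  by apply: le_INR; lia.
have : 2 / INR N < eps.
  apply: (Rmult_lt_reg_r (INR N)); first lra.
  have -> : 2 / INR N * INR N = 2 by field; lra.
  have : INR n * eps <= INR N * eps by apply: Rmult_le_compat_r; lra.
  lra.
rewrite /Rdist Rabs_left1; lra.
Qed.
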